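(* Let $\lambda\in(0,1)$ and $s=(s_1,s_2)\in\mathbb{R}^2$ with $|s|=1$, $s\neq e_1$, and either $s=e_2$ or $s_1s_2\neq0$. (i) For every $\gamma\in K_{s,\lambda}$ and $R\in SO(2)$ there exists $N\in\mathcal{M}_{e_1}\cap\mathcal{N}_s$ such that $Ne_1=Re_1$ and $\lambda N+(1-\lambda)R=R(\mathbb{I}+\gamma e_1\otimes e_2)$. (ii) Let $N\in\mathcal{N}_s$ and $R\in SO(2)$ with $Re_1=Ne_1$. Then there exists $\gamma\in K_{s,\lambda}$ such that $\lambda N+(1-\lambda)R=R(\mathbb{I}+\gamma e_1\otimes e_2)$.
   Context: $\mathcal{M}_{e_1}=\{F\in\mathbb{R}^{2\times2}:\det F=1,|Fe_1|=1\}$; $\mathcal{N}_s=\{F\in\mathbb{R}^{2\times2}:\det F=1,|Fs|\le1\}$. $K_{s,\lambda}=\{0\}$ if $s=e_2$; $K_{s,\lambda}=[-2\frac{s_1}{s_2}\lambda,0]$ if $s_1s_2>0$; $K_{s,\lambda}=[0,-2\frac{s_1}{s_2}\lambda]$ if $s_1s_2<0$. *)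

(* Defs.v *)
From HB Require Import structures.
From mathcomp Require Import all_boot all_order all_algebra.
Set Implicit Arguments. Unset Strict Implicit. Unset Printing Implicit Defensive.
Import Order.TTheory GRing.Theory Num.Theory.
Local Open Scope ring_scope.

Section Defs.
Variable R : rcfType.

Definition e1 : 'cV[R]_2 := \col_i (if i == 0 :> nat then 1 else 0).
Definition e2 : 'cV[R]_2 := \col_i (if i == 1 :> nat then 1 else 0).

Definition vnorm (v : 'cV[R]_2) : R := Num.sqrt (\sum_i v i 0 ^+ 2).

Definition tens (a b : 'cV[R]_2) : 'M[R]_2 := a *m b^T.

Definition SO2 (Q : 'M[R]_2) : Prop := Q^T *m Q = 1%:M /\ \det Q = 1.

Definition M_e1 (F : 'M[R]_2) : Prop := \det F = 1 /\ vnorm (F *m e1) = 1.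

Definition N_s (s : 'cV[R]_2) (F : 'M[R]_2) : Prop :=
  \det F = 1 /\ vnorm (F *m s) <= 1.

(* K_{s,lambda}; s1 = s 0 0, s2 = s 1 0. Empty in cases not covered by the paper. *)
Definition K_s (s : 'cV[R]_2) (lam : R) (g : R) : Prop :=
  let s1 := s 0 0 in let s2 := s 1 0 in
  if s == e2 then g = 0
  else if 0 < s1 * s2 then (-(2 * (s1 / s2) * lam) <= g <= 0 : Prop)
  else if s1 * s2 < 0 then (0 <= g <= -(2 * (s1 / s2) * lam) : Prop)
  else False.

End Defs.

(* Main.v *)
Require Import Defs.
From HB Require Import structures.
From mathcomp Require Import all_boot all_order all_algebra.
From mathcomp Require Import ring lra.
Import Order.TTheory GRing.Theory Num.Theory.
Local Open Scope ring_scope.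

Lemma det2 (R : comNzRingType) (A : 'M[R]_2) : \det A = A 0 0 * A 1 1 - A 0 1 * A 1 0.
Proof.
rewrite (expand_det_row _ 0) !big_ord_recl big_ord0 /cofactor !det_mx11 !mxE /=.
have l1 : lift (0 : 'I_2) (0 : 'I_1) = 1 by apply: val_inj.
have l2 : lift (ord0 : 'I_2) (0 : 'I_1) = 1 by apply: val_inj.
have l3 : lift (lift (ord0 : 'I_2) (ord0 : 'I_1)) (0 : 'I_1) = 0 by apply: val_inj.
have l4 : lift (ord0 : 'I_2) (ord0 : 'I_1) = 1 by apply: val_inj.
rewrite ?l1 ?l2 ?l3 ?l4 /= expr0 expr1.
have l5 : lift (1 : 'I_2) (0 : 'I_1) = 0 by apply: val_inj.
have l6 : (ord0 : 'I_2) = 0 by apply: val_inj.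
rewrite l5 l6; ring.
Qed.

Lemma ord2P (i : 'I_2) : i = 0 \/ i = 1.
Proof. case: i => [[|[|i]] Hi]; [left|right|by []]; exact: val_inj. Qed.
Lemma ord1P (i : 'I_1) : i = 0.
Proof. case: i => [[|i]] Hi //; exact: val_inj. Qed.

Lemma mul2E (R : comNzRingType) m n (A : 'M[R]_(m,2)) (B : 'M[R]_(2,n)) i j :
  (A *m B) i j = A i 0 * B 0 j + A i 1 * B 1 j.
Proof.
rewrite mxE !big_ord_recl big_ord0 addr0.
have -> : lift ord0 (ord0 : 'I_1) = 1 :> 'I_2 by apply: val_inj.
have -> : (ord0 : 'I_2) = 0 by apply: val_inj.
by [].
Qed.
Lemma mul1E (R : comNzRingType) m n (A : 'M[R]_(m,1)) (B : 'M[R]_(1,n)) i j :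
  (A *m B) i j = A i 0 * B 0 j.
Proof. by rewrite mxE big_ord_recl big_ord0 addr0. Qed.

Lemma mx2_eq (R : Type) (A B : 'M[R]_2) :
  A 0 0 = B 0 0 -> A 0 1 = B 0 1 -> A 1 0 = B 1 0 -> A 1 1 = B 1 1 -> A = B.
Proof.
move=> h1 h2 h3 h4; apply/matrixP => i j.
by case: (ord2P i) => ->; case: (ord2P j) => ->.
Qed.
Lemma cv2_eq (R : Type) (A B : 'cV[R]_2) :
  A 0 0 = B 0 0 -> A 1 0 = B 1 0 -> A = B.
Proof.
move=> h1 h2; apply/matrixP => i j; rewrite (ord1P j).
by case: (ord2P i) => ->.
Qed.

Lemma sum2E (R : rcfType) (v : 'cV[R]_2) : \sum_i v i 0 ^+ 2 = v 0 0 ^+ 2 + v 1 0 ^+ 2.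
Proof.
rewrite !big_ord_recl big_ord0 addr0.
have -> : lift ord0 (ord0 : 'I_1) = 1 :> 'I_2 by apply: val_inj.
have -> : (ord0 : 'I_2) = 0 by apply: val_inj.
by [].
Qed.

Lemma vnorm_le1 (R : rcfType) (v : 'cV[R]_2) :
  (vnorm v <= 1) = (v 0 0 ^+ 2 + v 1 0 ^+ 2 <= 1).
Proof. by rewrite /vnorm sum2E -{1}sqrtr1 ler_sqrt. Qed.

Lemma vnorm_eq1 (R : rcfType) (v : 'cV[R]_2) :
  (vnorm v = 1) <-> (v 0 0 ^+ 2 + v 1 0 ^+ 2 = 1).
Proof.
rewrite /vnorm sum2E; split => [h|->]; last exact: sqrtr1.
have h0 : 0 <= v 0 0 ^+ 2 + v 1 0 ^+ 2 by rewrite addr_ge0 // sqr_ge0.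
by rewrite -(sqr_sqrtr h0) h expr1n.
Qed.

Lemma big2 (R : nmodType) (F : 'I_2 -> R) : \sum_i F i = F 0 + F 1.
Proof.
rewrite !big_ord_recl big_ord0 addr0.
have -> : lift ord0 (ord0 : 'I_1) = 1 :> 'I_2 by apply: val_inj.
have -> : (ord0 : 'I_2) = 0 by apply: val_inj.
by [].
Qed.
Lemma big1' (R : nmodType) (F : 'I_1 -> R) : \sum_i F i = F 0.
Proof. by rewrite big_ord_recl big_ord0 addr0. Qed.


Ltac simpm := rewrite /tens ?(mxE, big2, big1') /= ?mulr1n ?mulr0n.

Lemma SO2E (R : rcfType) (Q : 'M[R]_2) : SO2 Q ->
  [/\ Q 0 1 = - Q 1 0, Q 1 1 = Q 0 0 & Q 0 0 ^+ 2 + Q 1 0 ^+ 2 = 1].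
Proof.
case=> h hd; rewrite det2 in hd.
have h00 := congr1 (fun M : 'M[R]_2 => M 0 0) h.
have h01 := congr1 (fun M : 'M[R]_2 => M 0 1) h.
have h11 := congr1 (fun M : 'M[R]_2 => M 1 1) h.
move: h00 h01 h11 => /=; simpm => h00 h01 h11.

have e3 : Q 0 0 ^+ 2 + Q 1 0 ^+ 2 = 1 by rewrite -h00; ring.
split => //.
  have H : Q 0 1 * (Q 0 0 ^+ 2 + Q 1 0 ^+ 2) + Q 1 0 * (Q 0 0 * Q 1 1 - Q 0 1 * Q 1 0) - Q 0 0 * (Q 0 0 * Q 0 1 + Q 1 0 * Q 1 1) = 0 by ring.
  rewrite e3 hd h01 mulr1 mulr1 mulr0 subr0 in H.
  by apply/eqP; rewrite -subr_eq0 opprK H.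
have H : Q 1 1 * (Q 0 0 ^+ 2 + Q 1 0 ^+ 2) - Q 0 0 * (Q 0 0 * Q 1 1 - Q 0 1 * Q 1 0) - Q 1 0 * (Q 0 0 * Q 0 1 + Q 1 0 * Q 1 1) = 0 by ring.
rewrite e3 hd h01 mulr1 mulr1 mulr0 subr0 in H.
by apply/eqP; rewrite -subr_eq0 H.
Qed.


Lemma Kiff (R : rcfType) (lam a : R) (s : 'cV[R]_2) : 0 < lam ->
  s 0 0 ^+ 2 + s 1 0 ^+ 2 = 1 -> (s = e2 R \/ s 0 0 * s 1 0 != 0) ->
  K_s s lam (lam * a) <-> (s 0 0 + a * s 1 0) ^+ 2 + s 1 0 ^+ 2 <= 1.
Proof.
move=> l0 hs hc; rewrite /K_s /=.
case: eqP => [->|hne].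
  rewrite /e2; simpm.
  split => [h|h].
    have : a = 0.
      by move/eqP: h; rewrite mulf_eq0 (gt_eqF l0) /= => /eqP.
    by move=> ->; lra.
  have : a = 0 by nra.
  by move=> ->; rewrite mulr0.
case: hc => [//|hc].
have s2n : s 1 0 != 0 by move: hc; rewrite mulf_eq0 negb_or => /andP[].
have s2p : 0 < s 1 0 ^+ 2 by rewrite exprn_even_gt0.
set t := s 0 0 / s 1 0.
have hs1 : s 0 0 = t * s 1 0 by rewrite /t divfK.
have key : ((s 0 0 + a * s 1 0) ^+ 2 + s 1 0 ^+ 2 <= 1) = (a * (a + 2 * t) <= 0).
  rewrite -subr_le0.
  have -> : (s 0 0 + a * s 1 0) ^+ 2 + s 1 0 ^+ 2 - 1 = s 1 0 ^+ 2 * (a * (a + 2 * t)).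
    have hs2 : (t * s 1 0) ^+ 2 + s 1 0 ^+ 2 = 1 by rewrite -hs1.
    rewrite hs1 -[X in _ - X = _]hs2; ring.
  by rewrite pmulr_rle0.
rewrite key.
case: (ltrgtP 0 (s 0 0 * s 1 0)) => h.
- have tp : 0 < t.
    move: h; rewrite hs1 -mulrA -expr2 => h.
    by rewrite -(pmulr_lgt0 _ s2p).
  split.
    case/andP=> h1 h2.
    have ha0 : a <= 0 by rewrite -(pmulr_rle0 _ l0).
    have ha1 : 0 <= a + 2 * t.
      by rewrite -(pmulr_rge0 _ l0) mulrDr; lra.
    by rewrite mulr_le0_ge0.
  move=> h1.
  have ha : a <= 0 /\ 0 <= a + 2 * t.
    case: (lerP a 0) => ha.
      split => //; case: (lerP 0 (a + 2 * t)) => // hb.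
      have : 0 < a * (a + 2 * t) by rewrite nmulr_rgt0 //; lra.
      lra.
    have : 0 < a * (a + 2 * t) by rewrite mulr_gt0 //; lra.
    lra.
  case: ha => ha hb.
  apply/andP; split; last by rewrite pmulr_rle0.
  have : 0 <= lam * (a + 2 * t) by rewrite mulr_ge0 //; lra.
  rewrite mulrDr; lra.
- have tn : t < 0.
    move: h; rewrite hs1 -mulrA -expr2 => h.
    by rewrite -(pmulr_llt0 _ s2p).
  split.
    case/andP=> h1 h2.
    have ha0 : 0 <= a by rewrite -(pmulr_rge0 _ l0).
    have ha1 : a + 2 * t <= 0.
      by rewrite -(pmulr_rle0 _ l0) mulrDr; lra.
    by rewrite mulr_ge0_le0.
  move=> h1.
  have ha : 0 <= a /\ a + 2 * t <= 0.
    case: (lerP 0 a) => ha.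
      split => //; case: (lerP (a + 2 * t) 0) => // hb.
      have ap : 0 < a by lra.
      have : 0 < a * (a + 2 * t) by rewrite mulr_gt0.
      lra.
    have : 0 < a * (a + 2 * t) by rewrite nmulr_rgt0 //; lra.
    lra.
  case: ha => ha hb.
  apply/andP; split; first by rewrite pmulr_rge0.
  have : lam * (a + 2 * t) <= 0 by rewrite pmulr_rle0.
  rewrite mulrDr; lra.
- by move: hc; rewrite -h eqxx.
Qed.


Lemma factsN (R : rcfType) (lam a : R) (s : 'cV[R]_2) (Q : 'M[R]_2) : SO2 Q ->
  let N := Q *m (1%:M + a *: tens (e1 R) (e2 R)) in
  [/\ \det N = 1, vnorm (N *m e1 R) = 1, N *m e1 R = Q *m e1 R,
      (vnorm (N *m s) <= 1) = ((s 0 0 + a * s 1 0) ^+ 2 + s 1 0 ^+ 2 <= 1) &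
      lam *: N + (1 - lam) *: Q = Q *m (1%:M + (lam * a) *: tens (e1 R) (e2 R))].
Proof.
move=> hQ N; case: (@SO2E _ _ hQ) => q01 q11 e3.
have rot : forall c d x y : R, (c * x - d * y) ^+ 2 + (d * x + c * y) ^+ 2 = (c ^+ 2 + d ^+ 2) * (x ^+ 2 + y ^+ 2)
  by move=> *; ring.
have Ne1 : N *m e1 R = Q *m e1 R.
  apply: cv2_eq; rewrite /N /e1; simpm; ring.
split => //.
- rewrite det2 /N; simpm; rewrite q01 q11.
  rewrite -[RHS]e3; ring.
- rewrite Ne1; apply/vnorm_eq1; rewrite /e1; simpm; rewrite -[RHS]e3; ring.
- rewrite vnorm_le1 /N; simpm; rewrite q01 q11.
  set x := s 0 0 + a * s 1 0; set y := s 1 0.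
  have h := rot (Q 0 0) (Q 1 0) x y; rewrite e3 mul1r in h; rewrite -h.
  by congr (_ <= _); rewrite /x /y; ring.
- apply: mx2_eq; rewrite /N; simpm; ring.
Qed.


Theorem lemma3p4 (R : rcfType) (lam : R) (s : 'cV[R]_2) :
  0 < lam < 1 ->
  vnorm s = 1 ->
  s <> e1 R ->
  (s = e2 R \/ s 0 0 * s 1 0 != 0) ->
  (forall (g : R) (Q : 'M[R]_2), K_s s lam g -> SO2 Q ->
     exists N : 'M[R]_2, M_e1 N /\ N_s s N /\ N *m e1 R = Q *m e1 R /\
       lam *: N + (1 - lam) *: Q = Q *m (1%:M + g *: tens (e1 R) (e2 R)))
  /\
  (forall (N Q : 'M[R]_2), N_s s N -> SO2 Q -> Q *m e1 R = N *m e1 R ->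
     exists g : R, K_s s lam g /\
       lam *: N + (1 - lam) *: Q = Q *m (1%:M + g *: tens (e1 R) (e2 R))).
Proof.
move=> /andP[l0 l1] /vnorm_eq1 hs _ hc; split.
  move=> g Q hK hQ.
  have hg : g = lam * (g / lam) by rewrite mulrC divfK // gt_eqF.
  rewrite hg in hK *.
  have := @factsN _ lam (g / lam) s Q hQ => /= -[h1 h2 h3 h4 h5].
  eexists; split; first by split; [exact: h1|exact: h2].
  split; last by split; [exact: h3|exact: h5].
  by split => //; rewrite h4; apply/(@Kiff _ _ _ _ l0 hs hc).
move=> N Q [hd hn] hQ heq.
case: (@SO2E _ _ hQ) => q01 q11 e3.
have h00 : N 0 0 = Q 0 0.
  by have := congr1 (fun v : 'cV[R]_2 => v 0 0) heq; rewrite /e1; simpm; lra.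
have h10 : N 1 0 = Q 1 0.
  by have := congr1 (fun v : 'cV[R]_2 => v 1 0) heq; rewrite /e1; simpm; lra.
rewrite det2 h00 h10 in hd.
set a := Q 0 0 * N 0 1 + Q 1 0 * N 1 1.
have hN : N = Q *m (1%:M + a *: tens (e1 R) (e2 R)).
  apply: mx2_eq; simpm; rewrite ?q01 ?q11 ?h00 ?h10; try ring.
    have H : Q 0 0 * a - Q 1 0 - N 0 1 = N 0 1 * (Q 0 0 ^+ 2 + Q 1 0 ^+ 2 - 1) + Q 1 0 * (Q 0 0 * N 1 1 - N 0 1 * Q 1 0 - 1) by rewrite /a; ring.
    rewrite e3 hd !subrr !mulr0 addr0 in H.
    by apply/eqP; rewrite eq_sym -subr_eq0; apply/eqP; rewrite -[RHS]H; ring.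
  have H : Q 1 0 * a + Q 0 0 - N 1 1 = N 1 1 * (Q 0 0 ^+ 2 + Q 1 0 ^+ 2 - 1) - Q 0 0 * (Q 0 0 * N 1 1 - N 0 1 * Q 1 0 - 1) by rewrite /a; ring.
  rewrite e3 hd !subrr !mulr0 subr0 in H.
  by apply/eqP; rewrite eq_sym -subr_eq0; apply/eqP; rewrite -[RHS]H; ring.
have := @factsN _ lam a s Q hQ => /= -[h1 h2 h3 h4 h5].
exists (lam * a); rewrite hN; split => //.
apply/(@Kiff _ _ _ _ l0 hs hc); rewrite -h4 -hN //.
Qed.
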